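(* Suppose that for every $c\in\{1,\dots,K-1\}$ the density $\bar p_c$ satisfies $$\bar p_c(\bm x,\bar Y)=\binom{K-1}{c}^{-1}\sum_{y\notin \bar Y}p(\bm x,y)\qquad(\bm x\in\mathcal X,\ \bar Y\in\overline{\mathcal Y}_c).$$ Let $\bm\alpha=(\alpha_1,\dots,\alpha_{K-1})$ satisfy $\alpha_c\ge 0$ and $\sum_{c=1}^{K-1}\alpha_c=1$. Define the multi-complementary risk $$R_{\mathrm{MCL}}(\bm g)=\sum_{c=1}^{K-1}\alpha_c R_c(\bm g),\qquad R_c(\bm g)=\mathbb E_{\bar p_c(\bm x,\bar Y)}\Big[\mathcal L(\bm g(\bm x))-\frac{K-1}{c}\sum_{y\in\bar Y}\ell(\bm g(\bm x),y)\Big].$$ Then for any loss $\ell$ and any decision function $\bm g$ (with finite expectations), $R_{\mathrm{MCL}}(\bm g)=R(\bm g)$.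
   Context: Let $K\ge 2$, $\mathcal X\subseteq\mathbb R^d$ the feature space and $\mathcal Y=\{1,\dots,K\}$ the label space. Let $p(\bm x,y)$ be a joint density on $\mathcal X\times\mathcal Y$ with marginal density $p(\bm x)$. For $c\in\{1,\dots,K-1\}$, $\overline{\mathcal Y}_c$ denotes the collection of all $c$-element subsets of $\{1,\dots,K\}$, and $\bar p_c(\bm x,\bar Y)$ is a density on $\mathcal X\times\overline{\mathcal Y}_c$. A decision function is a map $\bm g:\mathcal X\to\mathbb R^K$, a loss is a function $\ell:\mathbb R^K\times\mathcal Y\to[0,\infty)$, the classification risk is $R(\bm g)=\mathbb E_{p(\bm x,y)}[\ell(\bm g(\bm x),y)]$, and the cumulative loss is $\mathcal L(\bm g(\bm x))=\sum_{y=1}^K\ell(\bm g(\bm x),y)$. *)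

(* Defs.v *)
From HB Require Import structures.
From mathcomp Require Import all_boot all_order all_algebra.
Set Implicit Arguments. Unset Strict Implicit. Unset Printing Implicit Defensive.
Import Order.TTheory GRing.Theory Num.Theory.
Local Open Scope ring_scope.

(* Labels {1,...,K} are represented by 'I_K = {0,...,K-1}; features by
   row vectors 'rV[R]_d.  [I] is the integration functional over the
   feature space X (f |-> \int_X f(x) dx). *)

Section Defs.
Variables (R : realFieldType) (d K : nat).
Notation feat := 'rV[R]_d.

Definition cumloss (l : 'rV[R]_K -> 'I_K -> R) (v : 'rV[R]_K) : R :=
  \sum_(y : 'I_K) l v y.

Definition expect_p (I : (feat -> R) -> R) (p : feat -> 'I_K -> R)
  (f : feat -> 'I_K -> R) : R :=
  I (fun x => \sum_(y : 'I_K) p x y * f x y).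

Definition expect_pbar (I : (feat -> R) -> R)
  (pbar : nat -> feat -> {set 'I_K} -> R) (c : nat)
  (f : feat -> {set 'I_K} -> R) : R :=
  I (fun x => \sum_(Y : {set 'I_K} | #|Y| == c) pbar c x Y * f x Y).

Definition risk I p (l : 'rV[R]_K -> 'I_K -> R) (g : feat -> 'rV[R]_K) : R :=
  expect_p I p (fun x y => l (g x) y).

Definition risk_c I pbar (c : nat) (l : 'rV[R]_K -> 'I_K -> R)
  (g : feat -> 'rV[R]_K) : R :=
  expect_pbar I pbar c (fun x Y =>
    cumloss l (g x) - ((K - 1)%:R / c%:R) * \sum_(y in Y) l (g x) y).

Definition risk_MCL I pbar (alpha : nat -> R) l g : R :=
  \sum_(1 <= c < K) alpha c * risk_c I pbar c l g.

End Defs.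

(* Main.v *)
Require Import Defs.
From Stdlib Require Import FunctionalExtensionality.
From HB Require Import structures.
From mathcomp Require Import all_boot all_order all_algebra.
Import Order.TTheory GRing.Theory Num.Theory.
Local Open Scope ring_scope.

Lemma cnt (T:finType) (B:{set T}) (y : T) c : y \in B ->
  #|[set Y : {set T} | [&& Y \subset B, #|Y| == c.+1 & y \in Y]]| = 'C(#|B|.-1, c).
Proof.
move=> yB.
set S := [set Y : {set T} | (Y \subset B) && (#|Y| == c.+1)].
have := cardsID [set Y : {set T} | y \in Y] S.
have -> : S :&: [set Y : {set T} | y \in Y] = [set Y : {set T} | [&& Y \subset B, #|Y| == c.+1 & y \in Y]].
  by apply/setP => Y; rewrite !inE andbA.
have -> : S :\: [set Y : {set T} | y \in Y] = [set Y : {set T} | (Y \subset B :\ y) & (#|Y| == c.+1)].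
  apply/setP => Y; rewrite !inE subsetD1 andbC -!andbA; congr (_ && _); by rewrite andbC.
rewrite cards_draws /S cards_draws (cardsD1 y B) yB /= add1n binS => /eqP.
rewrite add0n addnC => /eqP H; exact: (addnI H).
Qed.

Lemma sum_count (R : nmodType) (T:finType) (P : pred {set T}) (F : T -> R) :
 \sum_(Y | P Y) \sum_(y in Y) F y = \sum_y F y *+ #|[set Y | P Y && (y \in Y)]|.
Proof.
under eq_bigr do rewrite big_mkcond.
rewrite exchange_big; apply: eq_bigr => y _.
rewrite -big_mkcondr (eq_bigl (fun Y => Y \in [set Y : {set T} | P Y && (y \in Y)])); last by move=> Y; rewrite inE.
by rewrite sumr_const.
Qed.

Lemma subC1 (T : finType) (Y : {set T}) y : (Y \subset [set~ y]) = (y \notin Y).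
Proof. by rewrite subsetC sub1set inE. Qed.

Lemma cntC (T : finType) (y y' : T) c : y' != y ->
  #|[set Y : {set T} | ((#|Y| == c.+1) && (y \notin Y)) && (y' \in Y)]| = 'C(#|T|.-1.-1, c).
Proof.
move=> ny; rewrite -(cardsC1 y) -(@cnt _ _ y'); last by rewrite !inE.
apply: eq_card => Y; rewrite !inE subC1.
by case: (y \in Y); case: (y' \in Y); rewrite ?andbF ?andbT.
Qed.

Lemma cnt0 (T : finType) (y : T) c :
  #|[set Y : {set T} | ((#|Y| == c) && (y \notin Y)) && (y \in Y)]| = 0%N.
Proof.
apply/eqP; rewrite cards_eq0; apply/eqP/setP => Y; rewrite !inE.
by case: (y \in Y); rewrite ?andbF.
Qed.

Lemma inner (R : realFieldType) c (hc : (0 < c)%N) (T : finType) (y : T) (Lz : T -> R) :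
  \sum_(Y : {set T} | (#|Y| == c) && (y \notin Y))
     (\sum_y' Lz y' - ((#|T| - 1)%:R / c%:R) * \sum_(y' in Y) Lz y')
  = ('C(#|T| - 1, c))%:R * Lz y.
Proof.
case: c hc => // c _.
have cB : #|[set~ y]| = (#|T| - 1)%N by rewrite cardsC1 subn1.
rewrite sumrB -big_distrr /= sum_count sumr_const.
have -> : #|(fun i : {set T} => (#|i| == c.+1) && (y \notin i))| = 'C(#|T| - 1, c.+1).
  rewrite -cB -cards_draws; apply: eq_card => Y; rewrite !inE subC1 andbC.
  by [].
rewrite [X in _ - _ * X](bigD1 y) //= cnt0 mulr0n add0r.
rewrite [X in _ - _ * X](eq_bigr (fun y' => Lz y' *+ 'C((#|T| - 1).-1, c))); last first.
  move=> y' ny; apply: congr1; have := @cntC T y y' c ny.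
  rewrite subn1 => <-; by apply: eq_card => Y; rewrite !inE.
rewrite sumrMnl [X in X *+ _](bigD1 y) //=.
move: (\sum_(i | i != y) Lz i) (Lz y) => S a.
have D : ((#|T| - 1)%:R * ('C((#|T| - 1).-1, c))%:R = (c.+1)%:R * ('C(#|T| - 1, c.+1))%:R :> R).
  by rewrite -!natrM mul_bin_diag.
have cn0 : (c.+1)%:R != 0 :> R by rewrite pnatr_eq0.
rewrite -[_ *+ 'C(#|T| - 1, c.+1)]mulr_natr -[_ *+ 'C((#|T| - 1).-1, c)]mulr_natr.
have -> : (#|T| - 1)%:R / (c.+1)%:R * (S * ('C((#|T| - 1).-1, c))%:R) = S * ('C(#|T| - 1, c.+1))%:R :> R.
  rewrite mulrC -mulrA; congr (S * _).
  rewrite mulrA [_ * (#|T| - 1)%:R]mulrC D.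
  by rewrite [(c.+1)%:R * _]mulrC mulfK.
by rewrite mulrDl addrK mulrC.
Qed.

Lemma xch (R : nmodType) (T : finType) (P : pred {set T}) (F : T -> {set T} -> R) :
  \sum_(Y | P Y) \sum_(y | y \notin Y) F y Y = \sum_y \sum_(Y | P Y && (y \notin Y)) F y Y.
Proof.
under eq_bigr do rewrite big_mkcond.
rewrite exchange_big; apply: eq_bigr => y _.
by rewrite big_mkcondr.
Qed.

Lemma point (R : realFieldType) (T : finType) c (hc : (1 <= c < #|T|)%N) (P Lz : T -> R) :
 \sum_(Y : {set T} | #|Y| == c) ('C(#|T| - 1, c))%:R^-1 * (\sum_(y | y \notin Y) P y)
    * (\sum_y Lz y - ((#|T| - 1)%:R / c%:R) * \sum_(y in Y) Lz y) = \sum_y P y * Lz y.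
Proof.
case/andP: hc => c1 cK.
have C0 : ('C(#|T| - 1, c))%:R != 0 :> R.
  by rewrite pnatr_eq0 -lt0n bin_gt0; by rewrite leq_subRL ?addn1 //; apply: leq_trans cK; rewrite ltnW.
under eq_bigr => Y _ do rewrite -mulrA mulr_suml.
rewrite -mulr_sumr /= xch.
rewrite (eq_bigr (fun y => P y * ('C(#|T| - 1, c)%:R * Lz y))); last first.
  by move=> y _; rewrite -mulr_sumr inner.
rewrite mulr_sumr; apply: eq_bigr => y _.
by rewrite mulrCA mulKf.
Qed.

Theorem theorem1 (R : realFieldType) (d K : nat) (hK : (2 <= K)%N)
  (I : ('rV[R]_d -> R) -> R)
  (integrable : ('rV[R]_d -> R) -> Prop)
  (int_add : forall f h, integrable f -> integrable h ->
     integrable (fun x => f x + h x))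
  (int_scale : forall (a : R) f, integrable f -> integrable (fun x => a * f x))
  (I_add : forall f h, integrable f -> integrable h ->
     I (fun x => f x + h x) = I f + I h)
  (I_scale : forall (a : R) f, integrable f -> I (fun x => a * f x) = a * I f)
  (p : 'rV[R]_d -> 'I_K -> R) (p_ge0 : forall x y, 0 <= p x y)
  (pbar : nat -> 'rV[R]_d -> {set 'I_K} -> R)
  (pbar_def : forall (c : nat) x (Y : {set 'I_K}), (1 <= c < K)%N -> #|Y| = c ->
     pbar c x Y = ('C(K - 1, c))%:R^-1 * \sum_(y : 'I_K | y \notin Y) p x y)
  (alpha : nat -> R)
  (alpha_ge0 : forall c, (1 <= c < K)%N -> 0 <= alpha c)
  (alpha_sum : \sum_(1 <= c < K) alpha c = 1)
  (l : 'rV[R]_K -> 'I_K -> R) (l_ge0 : forall v y, 0 <= l v y)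
  (g : 'rV[R]_d -> 'rV[R]_K)
  (fin_risk : integrable (fun x => \sum_(y : 'I_K) p x y * l (g x) y))
  (fin_risk_c : forall c, (1 <= c < K)%N ->
     integrable (fun x => \sum_(Y : {set 'I_K} | #|Y| == c) pbar c x Y *
        (cumloss l (g x) - ((K - 1)%:R / c%:R) * \sum_(y in Y) l (g x) y))) :
  risk_MCL I pbar alpha l g = risk I p l g.
Proof.
have Rc : forall c, (1 <= c < K)%N -> risk_c I pbar c l g = risk I p l g.
  move=> c hc; rewrite /risk_c /risk /expect_pbar /expect_p; congr (I _).
  apply: functional_extensionality => x.
  have hc' : (1 <= c < #|'I_K|)%N by rewrite card_ord.
  have := @point R _ c hc' (p x) (l (g x)); rewrite card_ord => <-.
  apply: eq_bigr => Y /eqP hY; rewrite pbar_def //.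
rewrite /risk_MCL (eq_big_nat _ _ (F2 := fun c => alpha c * risk I p l g)); last first.
  by move=> c hc; rewrite Rc.
by rewrite -mulr_suml /= alpha_sum mul1r.
Qed.
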